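(* Let $M$ be a matroid of rank $n$, where $n \ge 2$, and let $B_1, \dots, B_n$ be pairwise disjoint bases of $M$. Then there are at least $\left\lfloor \frac{n}{6 \lceil \log n \rceil} \right\rfloor$ pairwise disjoint transversal bases of $(B_1, \dots, B_n)$.
   Context: Here $\log$ denotes the natural logarithm. A transversal basis of a collection $(B_1,\dots,B_n)$ of sets of elements in a rank-$n$ matroid is a basis of the matroid containing exactly one element from each of $B_1,\dots,B_n$. *)

(* Defs.v *)
From HB Require Import structures.
From mathcomp Require Import all_boot all_order all_algebra.
From mathcomp Require Import reals exp Rstruct.
Set Implicit Arguments. Unset Strict Implicit. Unset Printing Implicit Defensive.
Import Order.TTheory GRing.Theory Num.Theory.

Record matroid (T : finType) := Matroid {
  indep : {set T} -> bool;
  indep0 : indep set0;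
  indep_subset : forall A B : {set T}, A \subset B -> indep B -> indep A;
  indep_exchange : forall A B : {set T}, indep A -> indep B -> #|A| < #|B| ->
    exists2 x, x \in B :\: A & indep (x |: A)
}.

Definition is_basis (T : finType) (M : matroid T) (B : {set T}) : bool :=
  indep M B && [forall X : {set T}, (indep M X && (B \subset X)) ==> (X == B)].

Definition mrank (T : finType) (M : matroid T) : nat :=
  \max_(A : {set T} | indep M A) #|A|.

Definition transversal_basis (T : finType) (M : matroid T) (n : nat)
  (B : 'I_n -> {set T}) (X : {set T}) : Prop :=
  is_basis M X /\ forall i : 'I_n, #|X :&: B i| = 1%N.

Definition tbound (n : nat) : nat :=
  `| Num.floor ((n%:R : Rdefinitions.R) /
        (6 * (Num.ceil (ln (n%:R : Rdefinitions.R)))%:~R)) |%N.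

(* Main.v *)
Require Import Defs.
From mathcomp Require Import all_boot all_order all_algebra.
From mathcomp Require Import zify ring lra.
From mathcomp Require Import reals sequences exp Rstruct.
Set Implicit Arguments. Unset Strict Implicit. Unset Printing Implicit Defensive.

Module Part1.

Section Rank.
Variables (T : finType) (M : matroid T).
Implicit Types X Y Z J K B : {set T}.

Definition rk (X : {set T}) : nat :=
  \max_(Y : {set T} | (Y \subset X) && indep M Y) #|Y|.

Lemma rk_ge (X Y : {set T}) : Y \subset X -> indep M Y -> #|Y| <= rk X.
Proof. by move=> sYX iY; apply: (@leq_bigmax_cond _ _ (fun Y : {set T} => #|Y|) Y); rewrite sYX iY. Qed.

Lemma rk_ex X : exists2 Y : {set T}, (Y \subset X) && indep M Y & #|Y| = rk X.
Proof.
have : 0 < #|[pred Y : {set T} | (Y \subset X) && indep M Y]|.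
  by apply/card_gt0P; exists set0; rewrite inE sub0set indep0.
move=> /(eq_bigmax_cond (fun Y : {set T} => #|Y|)) [Y HY E].
exists Y; first by move: HY; rewrite inE.
by symmetry; exact: E.
Qed.

Lemma rk_le_card X : rk X <= #|X|.
Proof. by have [Y /andP[sYX _] <-] := rk_ex X; apply: subset_leq_card. Qed.

Lemma rk_mono (X Y : {set T}) : X \subset Y -> rk X <= rk Y.
Proof.
move=> sXY; have [Z /andP[sZX iZ] <-] := rk_ex X.
by apply: rk_ge => //; apply: subset_trans sXY.
Qed.

Lemma indep_le_mrank Y : indep M Y -> #|Y| <= mrank M.
Proof. by move=> iY; apply: (@leq_bigmax_cond _ _ (fun Y : {set T} => #|Y|) Y). Qed.

Lemma rk_le_mrank X : rk X <= mrank M.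
Proof. by have [Y /andP[_ iY] <-] := rk_ex X; apply: indep_le_mrank. Qed.

Lemma mrank_ex : exists2 Y : {set T}, indep M Y & #|Y| = mrank M.
Proof.
have : 0 < #|[pred Y : {set T} | indep M Y]|.
  by apply/card_gt0P; exists set0; rewrite inE indep0.
move=> /(eq_bigmax_cond (fun Y : {set T} => #|Y|)) [Y HY E].
exists Y; first by move: HY; rewrite inE.
by symmetry; exact: E.
Qed.

Lemma rkT : rk setT = mrank M.
Proof.
apply/eqP; rewrite eqn_leq rk_le_mrank /=.
by have [Y iY <-] := mrank_ex; apply: rk_ge => //; apply: subsetT.
Qed.

Lemma rk_indep X : indep M X -> rk X = #|X|.
Proof. by move=> iX; apply/eqP; rewrite eqn_leq rk_le_card rk_ge. Qed.

Lemma rk_eq_card X : rk X = #|X| -> indep M X.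
Proof.
have [Y /andP[sYX iY] <-] := rk_ex X => /esym eXY.
suff -> : X = Y by [].
by apply/eqP; rewrite eq_sym eqEcard sYX eXY leqnn.
Qed.

Lemma extend (J Z : {set T}) : indep M J -> J \subset Z ->
  exists K : {set T}, [/\ J \subset K, K \subset Z, indep M K & #|K| = rk Z].
Proof.
move=> iJ sJZ.
have [k Hk] : exists k, rk Z - #|J| = k by eexists.
elim: k J iJ sJZ Hk => [|k IH] J iJ sJZ Hk.
  exists J; split=> //; apply/eqP; rewrite eqn_leq rk_ge //=.
  by move/eqP: Hk; rewrite subn_eq0.
have [Y /andP[sYZ iY] eY] := rk_ex Z.
have lt : #|J| < #|Y| by rewrite eY -subn_gt0 Hk.
have [x /setDP[xY xJ] ixJ] := indep_exchange iJ iY lt.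
have [||K [H1 H2 H3 H4]] := IH (x |: J) ixJ.
- by rewrite subUset sub1set (subsetP sYZ) // sJZ.
- by rewrite cardsU1 xJ add1n subnS Hk.
exists K; split=> //; apply: subset_trans H1; exact: subsetUr.
Qed.

Lemma rk_submod (X Y : {set T}) : rk (X :|: Y) + rk (X :&: Y) <= rk X + rk Y.
Proof.
have [J /andP[sJ iJ] eJ] := rk_ex (X :&: Y).
have sJU : J \subset X :|: Y by apply: subset_trans sJ _; apply: subset_trans (subsetIl X Y) (subsetUl X Y).
have [K [sJK sKU iK eK]] := extend iJ sJU.
have eKXY : K :&: (X :&: Y) = J.
  apply/eqP; rewrite eq_sym eqEcard subsetI sJK sJ /= eJ.
  by apply: rk_ge; [exact: subsetIr | apply: indep_subset iK; exact: subsetIl].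
have h1 : #|K :&: X| <= rk X by apply: rk_ge; [exact: subsetIr| apply: indep_subset iK; exact: subsetIl].
have h2 : #|K :&: Y| <= rk Y by apply: rk_ge; [exact: subsetIr| apply: indep_subset iK; exact: subsetIl].
have : #|K :&: X| + #|K :&: Y| = #|K| + #|J|.
  by rewrite -eKXY -cardsUI -setIUr (setIidPl sKU) setIACA setIid.
by rewrite -eK -eJ => <-; apply: leq_add.
Qed.

Lemma basis_card B : is_basis M B -> #|B| = mrank M.
Proof.
move=> /andP[iB /forallP mB]; apply/eqP; rewrite eqn_leq indep_le_mrank //=.
rewrite leqNgt; apply/negP => lt.
have [Y iY eY] := mrank_ex.
have lt' : #|B| < #|Y| by rewrite eY.
have [x /setDP[xY xB] ixB] := indep_exchange iB iY lt'.
have := mB (x |: B); rewrite ixB subsetUr /= => /eqP eq.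
by move: xB; rewrite -eq setU11.
Qed.

Lemma indep_basis X : indep M X -> #|X| = mrank M -> is_basis M X.
Proof.
move=> iX eX; rewrite /is_basis iX; apply/forallP => Y; apply/implyP => /andP[iY sXY].
by rewrite eq_sym eqEcard sXY eX indep_le_mrank.
Qed.

End Rank.

End Part1.
Import Part1.

Module Part2.

Section Rado.
Variables (T : finType) (M : matroid T).

Definition rado_cond n (A : 'I_n -> {set T}) :=
  forall I : {set 'I_n}, #|I| <= rk M (\bigcup_(k in I) A k).

Lemma rado_contra n (A : 'I_n -> {set T}) (i : 'I_n) (x y : T) :
  x != y -> rado_cond A ->
  let A1 := fun k => if k == i then A i :\ x else A k in
  let A2 := fun k => if k == i then A i :\ y else A k in
  rado_cond A1 \/ rado_cond A2.
Proof.
move=> nxy HA A1 A2.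
case: (boolP [forall I : {set 'I_n}, #|I| <= rk M (\bigcup_(k in I) A1 k)]) => [/forallP h1 | /forallPn [I1 hI1]].
  by left.
case: (boolP [forall I : {set 'I_n}, #|I| <= rk M (\bigcup_(k in I) A2 k)]) => [/forallP h2 | /forallPn [I2 hI2]].
  by right.
exfalso; rewrite -ltnNge in hI1; rewrite -ltnNge in hI2.
have iI1 : i \in I1.
  apply/negPn/negP => iI; move: hI1; rewrite ltnNge.
  suff -> : \bigcup_(k in I1) A1 k = \bigcup_(k in I1) A k by rewrite HA.
  apply: eq_bigr => k kI; rewrite /A1; case: eqP => // ek; by rewrite -ek kI in iI.
have iI2 : i \in I2.
  apply/negPn/negP => iI; move: hI2; rewrite ltnNge.
  suff -> : \bigcup_(k in I2) A2 k = \bigcup_(k in I2) A k by rewrite HA.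
  apply: eq_bigr => k kI; rewrite /A2; case: eqP => // ek; by rewrite -ek kI in iI.
set X := \bigcup_(k in I1) A1 k; set Y := \bigcup_(k in I2) A2 k.
have sU : \bigcup_(k in I1 :|: I2) A k \subset X :|: Y.
  apply/bigcupsP => k; rewrite inE => /orP kI; apply/subsetP => z zA.
  case: (eqVneq k i) => [ek|nki].
    subst k; case: (eqVneq z x) => [ezx|nzx].
      apply/setUP; right; apply/bigcupP; exists i => //.
      by rewrite /A2 eqxx !inE zA andbT; subst z.
    apply/setUP; left; apply/bigcupP; exists i => //.
    by rewrite /A1 eqxx !inE zA andbT.
  case: kI => kI; apply/setUP; [left|right]; apply/bigcupP; exists k => //.
    by rewrite /A1 (negbTE nki).
  by rewrite /A2 (negbTE nki).
have sI : \bigcup_(k in (I1 :&: I2) :\ i) A k \subset X :&: Y.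
  apply/bigcupsP => k; rewrite !inE => /and3P[nki kI1 kI2].
  rewrite subsetI; apply/andP; split.
    by apply: (bigcup_max k) => //; rewrite /A1 (negbTE nki).
  by apply: (bigcup_max k) => //; rewrite /A2 (negbTE nki).
have h1 := HA (I1 :|: I2); have h2 := HA ((I1 :&: I2) :\ i).
have h3 := rk_mono M sU; have h4 := rk_mono M sI.
have h5 := rk_submod M X Y.
have h6 : #|(I1 :&: I2) :\ i| = #|I1 :&: I2| - 1.
  by rewrite (cardsD1 i (I1 :&: I2)) inE iI1 iI2 /= add1n subn1 /= ; rewrite setDE.
have h7 := cardsUI I1 I2.
have h8 : 0 < #|I1 :&: I2| by apply/card_gt0P; exists i; rewrite inE iI1 iI2.
move: hI1 hI2 h1 h2 h3 h4 h5 h6 h7 h8; set a := rk M _; set b := rk M _; set c := rk M _; set d := rk M _; set e := rk M _; set f := rk M _. lia.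
Qed.

Lemma rado_base n (A : 'I_n -> {set T}) : (forall i, #|A i| <= 1) -> rado_cond A ->
  exists g : 'I_n -> T, (forall i, g i \in A i) /\
    indep M [set g i | i : 'I_n] /\ #|[set g i | i : 'I_n]| = n.
Proof.
move=> H1 HA.
have : forall i, exists z, A i = [set z].
  move=> i; apply/cards1P; rewrite eqn_leq H1 /=.
  have := HA [set i]; rewrite big_set1 cards1 => h; apply: leq_trans h _.
  exact: rk_le_card.
case/fin_all_exists => g Hg.
have eX : [set g i | i : 'I_n] = \bigcup_(k in [set: 'I_n]) A k.
  apply/setP => z; apply/imsetP/bigcupP => [[i _ ->]|[i _]].
    by exists i => //; rewrite Hg set11.
  by rewrite Hg inE => /eqP ->; exists i.
have h := HA setT; rewrite -eX cardsT card_ord in h.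
have h2 : #|[set g i | i : 'I_n]| <= n.
  by rewrite -[X in _ <= X]card_ord; exact: leq_imset_card.
have h3 := rk_le_card M [set g i | i : 'I_n].
have e : #|[set g i | i : 'I_n]| = n by apply/eqP; rewrite eqn_leq h2 (leq_trans h h3).
exists g; split; first by move=> i; rewrite Hg set11.
split=> //; apply: rk_eq_card; apply/eqP; rewrite eqn_leq rk_le_card e h //=.
Qed.

Lemma rado n (A : 'I_n -> {set T}) : rado_cond A ->
  exists g : 'I_n -> T, (forall i, g i \in A i) /\
    indep M [set g i | i : 'I_n] /\ #|[set g i | i : 'I_n]| = n.
Proof.
have [N HN] : exists N, \sum_(i < n) #|A i| <= N by eexists.
elim: N A HN => [|N IH] A HN HA;
  (case: (boolP [exists i, 1 < #|A i|]) => [/existsP [i Hi] | /existsPn Hall];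
    last by apply: rado_base => // i; rewrite leqNgt Hall).
  by move: HN; rewrite (bigD1 i) //=; lia.
have [x [y [xA yA nxy]]] := card_gt1P Hi.
have hsum : forall z, z \in A i ->
   \sum_(k < n) #|(fun k => if k == i then A i :\ z else A k) k| <= N.
  move=> z zA; move: HN; rewrite (bigD1 i) //= [X in _ -> X <= _](bigD1 i) //= eqxx.
  rewrite (cardsD1 z (A i)) zA.
  rewrite [X in _ -> _ + X <= _](eq_bigr (fun k => #|A k|)); first by rewrite /=; lia.
  by move=> k /negbTE ->.
have HA1 := rado_contra i nxy HA.
case: HA1 => HA1.
  have [g [Hg1 Hg2]] := IH _ (hsum x xA) HA1.
  exists g; split=> // k; have := Hg1 k; case: eqP => [->|_] //.
  by rewrite inE => /andP[].
have [g [Hg1 Hg2]] := IH _ (hsum y yA) HA1.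
exists g; split=> // k; have := Hg1 k; case: eqP => [->|_] //.
by rewrite inE => /andP[].
Qed.

End Rado.

End Part2.
Import Part2.

Module Part3.

Lemma card_ffam (aT rT : finType) (F : aT -> pred rT) :
  #|[pred f : {ffun aT -> rT} | [forall x, F x (f x)]]| = \prod_(x : aT) #|F x|.
Proof.
have := card_family F.
rewrite foldr_map => e.
have e2 : \prod_(x : aT) #|F x| = \prod_(x <- enum aT) #|F x| by rewrite big_enum.
have e3 : \prod_(x <- enum aT) #|F x| = foldr (fun x : aT => [eta muln #|F x|]) 1 (enum aT).
  by elim: (enum aT) => [|x s IH]; [rewrite big_nil | rewrite big_cons IH].
rewrite e2 e3 -e; apply: eq_card => f; rewrite inE.
by [].
Qed.

Section Count.
Variables (T : finType) (t : nat).
Local Notation Om := {ffun T -> 'I_t}.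

Lemma card_cond (Y : {set T}) (F : T -> pred 'I_t) :
  #|[pred x : Om | [forall y, (y \notin Y) || F y (x y)]]| =
    \prod_(y in Y) #|F y| * t ^ #|~: Y|.
Proof.
rewrite (card_ffam (fun y => [pred z | (y \notin Y) || F y z])).
rewrite (bigID (mem Y)) /=; congr (_ * _).
  by apply: eq_bigr => y yY; apply: eq_card => z; rewrite !inE yY.
rewrite -prod_nat_const; apply: eq_big => [y|y yY]; first by rewrite !inE.
rewrite -[RHS]card_ord; apply: eq_card => z; by rewrite !inE yY.
Qed.

Lemma sum_bool (aT : finType) (P : pred aT) : \sum_(c : aT) (P c : nat) = #|P|.
Proof. rewrite -sum1_card [in RHS]big_mkcond /=; apply: eq_bigr => c _; by rewrite unfold_in; case: (P c). Qed.

Definition mrg (Bs : {set T}) (c x : Om) : Om := [ffun y => if y \in Bs then x y else c y].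

Lemma merge_sum (Bs : {set T}) (F : Om -> nat) :
  \sum_(c : Om) \sum_(x : Om) F (mrg Bs c x) = t ^ #|T| * \sum_(f : Om) F f.
Proof.
have e : forall c x, F (mrg Bs c x) = \sum_(f : Om) (mrg Bs c x == f) * F f.
  move=> c x; rewrite (bigD1 (mrg Bs c x)) //= eqxx mul1n big1 ?addn0 //.
  by move=> f /negbTE; rewrite eq_sym => ->.
under eq_bigr => c _ do under eq_bigr => x _ do rewrite e.
rewrite big_distrr /=.
under eq_bigr => c _ do rewrite exchange_big /=.
rewrite exchange_big /=; apply: eq_bigr => f _.
under eq_bigr => c _ do rewrite -big_distrl /=.
rewrite -big_distrl /=; congr (_ * _).
have E : forall c x, (mrg Bs c x == f) =
   [forall y, (y \notin ~: Bs) || (c y == f y)] && [forall y, (y \notin Bs) || (x y == f y)].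
  move=> c x; apply/eqP/andP => [<-|[/forallP h1 /forallP h2]].
    split; apply/forallP => y; rewrite ffunE; case: (boolP (y \in Bs)) => yB; rewrite ?inE ?yB ?eqxx ?orbT //.
  apply/ffunP => y; rewrite ffunE; case: (boolP (y \in Bs)) => yB.
    by have := h2 y; rewrite yB => /eqP.
  by have := h1 y; rewrite inE yB => /eqP.
under eq_bigr => c _ do under eq_bigr => x _ do rewrite E.
transitivity ((\sum_(c : Om) ([forall y, (y \notin ~: Bs) || (c y == f y)] : nat)) *
   \sum_(x : Om) ([forall y, (y \notin Bs) || (x y == f y)] : nat)).
  rewrite big_distrl; apply: eq_bigr => c _; rewrite big_distrr; apply: eq_bigr => x _.
  symmetry; exact: mulnb.
rewrite (sum_bool [pred c : Om | [forall y, (y \notin ~: Bs) || (c y == f y)]]).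
rewrite (sum_bool [pred c : Om | [forall y, (y \notin Bs) || (c y == f y)]]).
rewrite (card_cond (~: Bs) (fun y => pred1 (f y))) (card_cond Bs (fun y => pred1 (f y))).
under eq_bigr do rewrite card1.
under [X in _ * (X * _) = _]eq_bigr do rewrite card1.
rewrite !prod_nat_const !exp1n !mul1n setCK.
by rewrite -expnD ?cardsC // addnC cardsC.
Qed.

Lemma sum_bool_set (aT : finType) (A : {set aT}) : \sum_(c : aT) (c \in A : nat) = #|A|.
Proof. by rewrite -sum1_card [in RHS]big_mkcond /=; apply: eq_bigr => c _; by case: (c \in A). Qed.

Lemma sum_binom (S : {set T}) (j : 'I_t) (m : nat) :
  \sum_(x : Om) 'C(#|[set y in S | x y != j]|, m) * t ^ m =
    'C(#|S|, m) * (t - 1) ^ m * t ^ #|T|.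
Proof.
under eq_bigr => x _ do rewrite -cards_draws -sum_bool_set big_distrl /=.
rewrite exchange_big /= -cards_draws -sum_bool_set big_distrl /= big_distrl /=.
apply: eq_bigr => Y _; rewrite !inE.
case: (boolP ((Y \subset S) && (#|Y| == m))) => [/andP[sYS /eqP cY] | H]; last first.
  rewrite mul0n; apply: big1 => x _; rewrite inE.
  case: (boolP (Y \subset [set y in S | x y != j])) => //= sY.
  have sYS : Y \subset S.
    by apply/subsetP => y /(subsetP sY); rewrite inE => /andP[].
  by rewrite sYS /= in H; rewrite (negbTE H).
rewrite mul1n -big_distrl /=.
rewrite (eq_bigr (fun x : Om => ([forall y, (y \notin Y) || (x y \in predC1 j)] : nat))); last first.
  move=> x _; rewrite inE cY eqxx andbT.
  congr nat_of_bool; apply/subsetP/forallP => [h y|h y yY].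
    by case: (boolP (y \in Y)) => //= /h; rewrite inE => /andP[].
  by rewrite inE (subsetP sYS) //=; have := h y; rewrite yY.
rewrite (sum_bool [pred x : Om | [forall y, (y \notin Y) || (x y \in predC1 j)]]).
rewrite (card_cond Y (fun _ => predC1 j)).
under eq_bigr do rewrite cardC1 card_ord.
rewrite prod_nat_const cY -mulnA -expnD -cY addnC cardsC subn1.
by [].
Qed.

End Count.

End Part3.
Import Part3.

Module Part4.

Section Prob.
Variables (T : finType) (M : matroid T) (n : nat) (B : 'I_n -> {set T}).
Hypothesis hM : mrank M = n.
Hypothesis hB : forall i, is_basis M (B i).
Hypothesis hD : forall i k, i != k -> [disjoint B i & B k].
Variables (t : nat) (j : 'I_t).
Local Notation Om := {ffun T -> 'I_t}.

Definition colr (c : Om) (i : 'I_n) : {set T} := [set y in B i | c y == j].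

Lemma span_set (U : {set T}) (i : 'I_n) : exists S : {set T},
  [/\ S \subset B i, #|S| = n - rk M U &
      forall S' : {set T}, S' \subset S -> rk M U + #|S'| <= rk M (U :|: S')].
Proof.
have [J /andP[sJU iJ] eJ] := rk_ex M U.
have [K [sJK sKJB iK eK]] := extend iJ (subsetUl J (B i)).
have cB : #|B i| = n by rewrite (basis_card (hB i)).
have eK' : #|K| = n.
  rewrite eK; apply/eqP; rewrite eqn_leq -{1}hM rk_le_mrank /= -{1}cB.
  by apply: rk_ge; [exact: subsetUr | by have /andP[] := hB i].
exists (K :\: J); split.
- apply/subsetP => y; rewrite inE => /andP[yJ yK].
  by have := subsetP sKJB y yK; rewrite inE (negbTE yJ).
- by rewrite cardsD (setIidPr sJK) eK' eJ.
move=> S' sS'.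
have dJS : [disjoint J & S'].
  rewrite -setI_eq0; apply/eqP/setP => y; rewrite !inE.
  apply/negP => /andP[yJ yS]; by have := subsetP sS' y yS; rewrite inE yJ.
have iJS : indep M (J :|: S').
  apply: indep_subset iK; rewrite subUset sJK /=; apply: subset_trans sS' _.
  exact: subsetDl.
have sJSU : J :|: S' \subset U :|: S' by apply: setSU.
have := rk_ge sJSU iJS.
by rewrite cardsU (disjoint_setI0 dJS) cards0 subn0 eJ.
Qed.

Lemma one_step (U : {set T}) (i : 'I_n) (m : nat) :
  t ^ m * \sum_(x : Om) 'C(n - rk M (U :|: colr x i), m) <=
    t ^ #|T| * 'C(n - rk M U, m) * (t - 1) ^ m.
Proof.
have [S [sSB cS HS]] := span_set U i.
rewrite mulnC big_distrl /=.
apply: (@leq_trans (\sum_(x : Om) 'C(#|[set y in S | x y != j]|, m) * t ^ m)).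
  apply: leq_sum => x _; rewrite leq_mul2r; apply/orP; right.
  apply: leq_bin2l.
  set S1 := [set y in S | x y == j].
  have h1 : #|S1| + #|[set y in S | x y != j]| = #|S|.
    rewrite -(cardsID [set y | x y == j] S); congr (_ + _); apply: eq_card => y; by rewrite !inE // andbC.
  have sS1 : S1 \subset S by apply/subsetP => y; rewrite inE => /andP[].
  have h2 := HS S1 sS1.
  have h3 : rk M (U :|: S1) <= rk M (U :|: colr x i).
    apply: rk_mono; apply: setUS; apply/subsetP => y; rewrite !inE => /andP[yS ->].
    by rewrite (subsetP sSB).
  have h4 := rk_le_mrank M U; rewrite hM in h4.
  lia.
by rewrite sum_binom cS mulnC mulnA.
Qed.

Lemma col_mrg (c x : Om) (i : 'I_n) : colr (mrg (B i) c x) i = colr x i.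
Proof.
apply/setP => y; rewrite !inE ffunE.
by case: (boolP (y \in B i)).
Qed.

Lemma col_mrg_other (c x : Om) (i k : 'I_n) : k != i -> colr (mrg (B i) c x) k = colr c k.
Proof.
move=> nki; apply/setP => y; rewrite !inE ffunE.
case: (boolP (y \in B k)) => //= yk.
by rewrite (disjointFr (hD nki) yk).
Qed.

Lemma t_pos : 0 < t.
Proof. exact: leq_ltn_trans (leq0n j) (ltn_ord j). Qed.

Lemma seq_bound m (s : seq 'I_n) : uniq s -> forall U : {set T},
  t ^ (m * size s) * \sum_(c : Om) 'C(n - rk M (U :|: \bigcup_(i <- s) colr c i), m)
    <= t ^ #|T| * 'C(n - rk M U, m) * (t - 1) ^ (m * size s).
Proof.
elim: s => [|i s IH] /=.
  move=> _ U; rewrite muln0 expn0 mul1n muln1.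
  under eq_bigr do rewrite big_nil setU0.
  by rewrite sum_nat_const card_ffun card_ord.
move=> /andP[nis us] U.
have tpos : 0 < t ^ #|T| by rewrite expn_gt0 t_pos.
rewrite -(leq_pmul2l tpos).
have E1 : t ^ #|T| * \sum_(c : Om) 'C(n - rk M (U :|: \bigcup_(k <- i :: s) colr c k), m)
   = \sum_(x : Om) \sum_(c : Om) 'C(n - rk M ((U :|: colr x i) :|: \bigcup_(k <- s) colr c k), m).
  rewrite -(merge_sum (B i)) exchange_big /=.
  apply: eq_bigr => x _; apply: eq_bigr => c _.
  rewrite big_cons col_mrg setUA; congr ('C(n - rk M (_ :|: _), m)).
  rewrite big_seq [RHS]big_seq; apply: eq_bigr => k ks.
  apply: col_mrg_other; apply/eqP => eki; by rewrite -eki ks in nis.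
have E2 := fun x => IH us (U :|: colr x i).
have E3 := one_step U i m.
set Q := fun x : Om => \sum_(c : Om) 'C(n - rk M ((U :|: colr x i) :|: \bigcup_(k <- s) colr c k), m).
set P := fun x : Om => 'C(n - rk M (U :|: colr x i), m).
have E4 : t ^ (m * size s) * \sum_(x : Om) Q x <=
     t ^ #|T| * (t - 1) ^ (m * size s) * \sum_(x : Om) P x.
  rewrite !big_distrr /=; apply: leq_sum => x _.
  apply: leq_trans (E2 x) _; apply: eq_leq; rewrite /P; ring.
rewrite mulnA [t ^ #|T| * _]mulnC -mulnA E1 -/Q.
rewrite mulnS expnD -mulnA.
apply: leq_trans (leq_mul (leqnn (t ^ m)) E4) _.
rewrite mulnCA; apply: leq_trans (leq_mul (leqnn _) E3) _.
apply: eq_leq; rewrite expnD; ring.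
Qed.

Lemma rk0 : rk M set0 = 0.
Proof. by apply/eqP; rewrite -leqn0; apply: leq_trans (rk_le_card M set0) _; rewrite cards0. Qed.

Lemma bad_bound (I : {set 'I_n}) :
  #|[set c : Om | rk M (\bigcup_(i in I) colr c i) < #|I|]| * t ^ ((n.+1 - #|I|) * #|I|)
   <= t ^ #|T| * 'C(n, n.+1 - #|I|) * (t - 1) ^ ((n.+1 - #|I|) * #|I|).
Proof.
set m := n.+1 - #|I|.
have H := seq_bound m (enum_uniq (mem I)) set0.
rewrite -cardE rk0 subn0 in H.
have E : \sum_(c : Om) 'C(n - rk M (set0 :|: \bigcup_(i <- enum I) colr c i), m) =
   \sum_(c : Om) 'C(n - rk M (\bigcup_(i in I) colr c i), m).
  by apply: eq_bigr => c _; rewrite set0U big_enum.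
rewrite E in H.
rewrite mulnC; apply: leq_trans H; rewrite leq_mul2l; apply/orP; right.
rewrite -sum_bool_set; apply: leq_sum => c _; rewrite inE.
case: ltnP => //= H; rewrite bin_gt0.
have : #|I| <= n by rewrite -[X in _ <= X]card_ord max_card.
rewrite /m; move: H; set r := rk M _; set k := #|I|; lia.
Qed.

End Prob.

End Part4.
Import Part4.

Module Part5.
Import Order.TTheory GRing.Theory Num.Theory.

Lemma bin_le_exp n k : 'C(n, k) <= n ^ k.
Proof.
elim: k => [|k IH]; first by rewrite bin0.
apply: (@leq_trans (k.+1 * 'C(n, k.+1))); first by rewrite leq_pmull.
rewrite mul_bin_left expnS; apply: leq_mul => //; exact: leq_subr.
Qed.

Lemma binbin_le n c : 1 <= c <= n ->
  'C(n, c) * 'C(n, n.+1 - c) * n ^ 2 <= n ^ (3 * minn c (n.+1 - c)).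
Proof.
move=> /andP[c1 cn].
have n1 : 0 < n by apply: leq_trans cn.
case: (leqP c (n.+1 - c)) => h.
  have e : 'C(n, n.+1 - c) = 'C(n, c.-1).
    by rewrite -(bin_sub (_ : c.-1 <= n)); [congr 'C(_, _); lia | lia].
  rewrite e; apply: (@leq_trans (n ^ c * n ^ c.-1 * n ^ 2)).
    by apply: leq_mul => //; apply: leq_mul; apply: bin_le_exp.
  rewrite -!expnD; apply: leq_pexp2l => //; lia.
have e : 'C(n, c) = 'C(n, (n.+1 - c).-1).
  by rewrite -(bin_sub (_ : (n.+1 - c).-1 <= n)); [congr 'C(_, _); lia | lia].
rewrite e; apply: (@leq_trans (n ^ (n.+1 - c).-1 * n ^ (n.+1 - c) * n ^ 2)).
  by apply: leq_mul => //; apply: leq_mul; apply: bin_le_exp.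
rewrite -!expnD; apply: leq_pexp2l => //; lia.
Qed.

Lemma mc_ge n c : 1 <= c <= n -> minn c (n.+1 - c) * n.+1 <= 2 * ((n.+1 - c) * c).
Proof.
move=> /andP[c1 cn]; case: (leqP c (n.+1 - c)) => h.
  nia.
nia.
Qed.

Local Open Scope ring_scope.

Lemma term_bound (R : realType) (n t c : nat) (L : R) : (1 <= t)%N -> (1 <= c <= n)%N ->
  6 * L * t%:R <= n%:R -> n%:R <= expR L ->
  ('C(n, c) * 'C(n, n.+1 - c))%:R * (1 - t%:R^-1) ^+ ((n.+1 - c) * c) * n%:R ^+ 2 <= 1 :> R.
Proof.
move=> t1 hc h6 hL.
set a := minn c (n.+1 - c); set k := ((n.+1 - c) * c)%N.
have tpos : 0 < t%:R :> R by rewrite ltr0n.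
have ti1 : t%:R^-1 <= 1 :> R by rewrite invf_le1 // ler1n.
have hq0 : 0 <= 1 - t%:R^-1 :> R by rewrite subr_ge0.
have hq : 1 - t%:R^-1 <= expR (- t%:R^-1) :> R.
  by have := expR_ge1Dx (- t%:R^-1 : R).
have hqk : (1 - t%:R^-1) ^+ k <= expR (k%:R * - t%:R^-1) :> R.
  rewrite expRM_natl; apply: lerXn2r; rewrite ?nnegrE ?expR_ge0 ?ler0n //.
have hn : n%:R ^+ (3 * a) <= expR ((3 * a)%:R * L) :> R.
  rewrite expRM_natl; apply: lerXn2r; rewrite ?nnegrE ?expR_ge0 ?ler0n //.
have hmc := mc_ge hc.
have h1 : a%:R * n.+1%:R <= 2 * k%:R :> R.
  by rewrite -natrM -[2]/(2%:R) -natrM ler_nat.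
have h2 : a%:R * (6 * L * t%:R) <= a%:R * n%:R :> R.
  by apply: ler_wpM2l => //; rewrite ler0n.
have key : (3 * a)%:R * L + k%:R * - t%:R^-1 <= 0 :> R.
  rewrite mulrN subr_le0 ler_pdivlMr // natrM.
  rewrite -addn1 natrD in h1; set X := a%:R * (L * t%:R).
  have e : a%:R * (6 * L * t%:R) = 6 * X by rewrite /X; ring.
  rewrite e in h2.
  have -> : 3%:R * a%:R * L * t%:R = 3 * X :> R by rewrite /X; ring.
  have a0 : 0 <= a%:R :> R by rewrite ler0n.
  lra.
have hcc := binbin_le hc.
have hcc' : ('C(n, c) * 'C(n, n.+1 - c))%:R * n%:R ^+ 2 <= n%:R ^+ (3 * a) :> R.
  by rewrite -natrX -natrM -natrX ler_nat.
apply: (@le_trans _ _ (n%:R ^+ (3 * a) * (1 - t%:R^-1) ^+ k)).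
  rewrite mulrAC; apply: ler_wpM2r => //; exact: exprn_ge0.
apply: (@le_trans _ _ (expR ((3 * a)%:R * L) * expR (k%:R * - t%:R^-1))).
  apply: ler_pM => //; [exact: exprn_ge0 | exact: exprn_ge0].
by rewrite -exp.expRD -[X in _ <= X](exp.expR0 R) ler_expR.
Qed.

Lemma sum_card_set (R : realType) (n : nat) (f : nat -> R) :
  \sum_(I : {set 'I_n}) f #|I| = \sum_(c < n.+1) 'C(n, c)%:R * f c.
Proof.
have e : forall I : {set 'I_n}, f #|I| = \sum_(c < n.+1) (#|I| == c)%:R * f c.
  move=> I; have hI : (#|I| < n.+1)%N by rewrite ltnS -[X in (_ <= X)%N]card_ord max_card.
  rewrite (bigD1 (Ordinal hI)) //= eqxx mul1r big1 ?addr0 // => c hc.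
  have -> : (#|I| == c) = false; last by rewrite mul0r.
  apply/negbTE; apply: contra hc => /eqP h; apply/eqP; apply: val_inj => /=; by rewrite h.
under eq_bigr do rewrite e.
rewrite exchange_big /=; apply: eq_bigr => c _.
rewrite -big_distrl /=; congr (_ * _).
rewrite -[n in 'C(n, _)]card_ord -card_draws -sum1_card natr_sum.
rewrite [in RHS]big_mkcond /=; apply: eq_bigr => I _; rewrite inE.
by case: (_ == _).
Qed.

Lemma sum_bound (R : realType) (n t : nat) (L : R) : (2 <= n)%N -> (1 <= t)%N ->
  6 * L * t%:R <= n%:R -> n%:R <= expR L -> 1 <= L ->
  t%:R * \sum_(I : {set 'I_n}) 'C(n, n.+1 - #|I|)%:R * (1 - t%:R^-1) ^+ ((n.+1 - #|I|) * #|I|) < 1 :> R.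
Proof.
move=> n2 t1 h6 hL L1.
rewrite (@sum_card_set R n (fun c => 'C(n, n.+1 - c)%:R * (1 - t%:R^-1) ^+ ((n.+1 - c) * c))).
have npos : 0 < n%:R :> R by rewrite ltr0n; apply: leq_trans n2.
have n2pos : 0 < n%:R ^+ 2 :> R by apply: exprn_gt0.
have hterm : forall c : 'I_n.+1,
   'C(n, c)%:R * ('C(n, n.+1 - c)%:R * (1 - t%:R^-1) ^+ ((n.+1 - c) * c)) <= (n%:R ^+ 2)^-1 :> R.
  move=> c; case: (posnP c) => [c0|cpos].
    by rewrite c0 subn0 (bin_small (ltnSn n)) mulr0n mul0r mulr0 invr_ge0 ltW.
  have hc : (1 <= c <= n)%N by rewrite cpos -ltnS ltn_ord.
  have h := term_bound t1 hc h6 hL.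
  rewrite -(ler_pM2r n2pos) mulVf ?gt_eqF //.
  by move: h; rewrite natrM !mulrA.
apply: (@le_lt_trans _ _ (t%:R * ((n.+1)%:R * (n%:R ^+ 2)^-1))).
  apply: ler_wpM2l; first exact: ler0n.
  apply: le_trans (ler_sum _ (fun c _ => hterm c)) _.
  by rewrite sumr_const card_ord mulr_natl.
rewrite mulrA ltr_pdivrMr // mul1r.
have t6 : 6 * t%:R <= n%:R :> R.
  apply: le_trans h6; rewrite ler_pM2r ?ltr0n //; lra.
have n2' : 2%:R <= n%:R :> R by rewrite ler_nat.
rewrite -addn1 natrD; nra.
Qed.

End Part5.
Import Part5.

Module Part6.
Import Order.TTheory GRing.Theory Num.Theory.

Lemma exists_good (R : realType) (T : finType) (M : matroid T) (n : nat) (B : 'I_n -> {set T})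
  (hM : mrank M = n) (hB : forall i, is_basis M (B i))
  (hD : forall i k, i != k -> [disjoint B i & B k]) (t : nat) :
  (0 < t)%N ->
  (t%:R * \sum_(I : {set 'I_n}) 'C(n, n.+1 - #|I|)%:R *
      (1 - t%:R^-1) ^+ ((n.+1 - #|I|) * #|I|) < 1 :> R)%R ->
  exists c : {ffun T -> 'I_t}, forall (j : 'I_t) (I : {set 'I_n}),
    #|I| <= rk M (\bigcup_(i in I) colr B j c i).
Proof.
move=> t0 hlt.
case: (pickP [pred c : {ffun T -> 'I_t} | [forall j : 'I_t, forall I : {set 'I_n},
      #|I| <= rk M (\bigcup_(i in I) colr B j c i)]]) => [c Hc | Hnone].
  exists c => j I; move: Hc; rewrite inE => /forallP /(_ j) /forallP /(_ I); done.
exfalso.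
set bad := fun (j : 'I_t) (I : {set 'I_n}) =>
  [set c : {ffun T -> 'I_t} | rk M (\bigcup_(i in I) colr B j c i) < #|I|].
have cnt : (t ^ #|T| <= \sum_(j : 'I_t) \sum_(I : {set 'I_n}) #|bad j I|)%N.
  have -> : t ^ #|T| = \sum_(c : {ffun T -> 'I_t}) 1.
    by rewrite sum1_card card_ffun card_ord.
  under [X in (_ <= X)%N]eq_bigr do under eq_bigr do rewrite -sum_bool_set.
  under [X in (_ <= X)%N]eq_bigr do rewrite exchange_big /=.
  rewrite exchange_big /=; apply: leq_sum => c _.
  have := Hnone c; rewrite /= => /negbT /forallPn [j /forallPn [I hI]].
  rewrite -ltnNge in hI.
  rewrite (bigD1 j) //= (bigD1 I) //= inE hI /=.
  by rewrite -addnA leq_addr.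
have tR : (0 < t%:R :> R)%R by rewrite ltr0n.
have hq : (1 - t%:R^-1 = (t - 1)%N%:R / t%:R :> R)%R.
  by rewrite natrB // mulrBl divff ?gt_eqF // mul1r.
have hb : forall (j : 'I_t) (I : {set 'I_n}),
   (#|bad j I|%:R <= (t ^ #|T|)%:R * ('C(n, n.+1 - #|I|)%:R *
      (1 - t%:R^-1) ^+ ((n.+1 - #|I|) * #|I|)) :> R)%R.
  move=> j I; have h := bad_bound hM hB hD j I.
  rewrite hq expr_div_n !mulrA ler_pdivlMr ?exprn_gt0 //.
  by rewrite -!natrX -!natrM ler_nat.
have : ((t ^ #|T|)%:R <= (t ^ #|T|)%:R * (t%:R * \sum_(I : {set 'I_n}) 'C(n, n.+1 - #|I|)%:R *
      (1 - t%:R^-1) ^+ ((n.+1 - #|I|) * #|I|)) :> R)%R.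
  apply: (le_trans (_ : _ <= (\sum_(j : 'I_t) \sum_(I : {set 'I_n}) #|bad j I|)%N%:R)%R).
    by rewrite ler_nat.
  rewrite natr_sum; under eq_bigr do rewrite natr_sum.
  apply: le_trans; first by apply: ler_sum => j _; apply: ler_sum => I _; exact: hb j I.
  rewrite sumr_const card_ord -big_distrr /=.
  by rewrite -[(_ *+ t)%R]mulr_natl mulrCA.
have tTpos : (0 < (t ^ #|T|)%:R :> R)%R by rewrite ltr0n expn_gt0 t0.
rewrite -[X in (X <= _)%R]mulr1 ler_pM2l //; rewrite leNgt hlt //.
Qed.

End Part6.
Import Part6.

Import Order.TTheory GRing.Theory Num.Theory.

Lemma tbound_facts n : (2 <= n)%N -> (0 < tbound n)%N ->
  exists L : Rdefinitions.R,
    [/\ (6 * L * (tbound n)%:R <= n%:R)%R, (n%:R <= expR L)%R & (1 <= L)%R].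
Proof.
move=> n2 tpos.
have n1 : (1 < n%:R :> Rdefinitions.R)%R by rewrite ltr1n.
have lx : (0 < ln (n%:R : Rdefinitions.R))%R by apply: ln_gt0.
have Lz1 : (1 <= Num.ceil (ln (n%:R : Rdefinitions.R)))%R by rewrite -gtz0_ge1 ceil_gt0.
exists ((Num.ceil (ln (n%:R : Rdefinitions.R)))%:~R)%R; split.
- rewrite /tbound.
  set L := ((Num.ceil (ln (n%:R : Rdefinitions.R)))%:~R : Rdefinitions.R)%R.
  have L1 : (1 <= L)%R by rewrite /L ler1z.
  have Lp : (0 < 6 * L)%R by lra.
  have y0 : (0 <= n%:R / (6 * L) :> Rdefinitions.R)%R by rewrite divr_ge0 // ?ler0n; lra.
  rewrite natr_absz ger0_norm ?floor_ge0 //.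
  have := floor_le (n%:R / (6 * L) : Rdefinitions.R).
  by rewrite ler_pdivlMr // mulrC.
- rewrite -[X in (X <= _)%R](@lnK _ (n%:R : Rdefinitions.R)%R); last by rewrite posrE; lra.
  by rewrite ler_expR; apply: ceil_ge.
- by rewrite ler1z.
Qed.

Theorem theorem1p2 (T : finType) (M : matroid T) (n : nat) :
  (2 <= n)%N -> mrank M = n ->
  forall B : 'I_n -> {set T},
    (forall i, is_basis M (B i)) ->
    (forall i j, i != j -> [disjoint B i & B j]) ->
    exists F : 'I_(tbound n) -> {set T},
      (forall k, transversal_basis M B (F k)) /\
      (forall k l, k != l -> [disjoint F k & F l]).
Proof.
move=> n2 hM B hB hD.
case: (posnP (tbound n)) => [t0 | tpos].
  exists (fun _ => set0); split => [k | k l]; exfalso; case: k => k' kt; by rewrite t0 in kt.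
have [L [h6 hL L1]] := tbound_facts n2 tpos.
have hs := sum_bound n2 tpos h6 hL L1.
have [c Hc] := exists_good hM hB hD tpos hs.
have : forall j : 'I_(tbound n), exists g : 'I_n -> T,
    (forall i, g i \in colr B j c i) /\
    indep M [set g i | i : 'I_n] /\ #|[set g i | i : 'I_n]| = n.
  move=> j; apply: rado => I; exact: Hc.
case/fin_all_exists => G HG.
exists (fun k => [set G k i | i : 'I_n]); split.
  move=> k; have [h1 [h2 h3]] := HG k.
  have inB : forall i, G k i \in B i.
    by move=> i; have := h1 i; rewrite inE => /andP[].
  split; first by apply: indep_basis => //; rewrite h3 hM.
  move=> i; apply/eqP/cards1P; exists (G k i); apply/setP => z; rewrite !inE.
  apply/andP/eqP => [[/imsetP [i' _ ->] zB] | ->].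
    case: (eqVneq i' i) => [-> //| nii].
    by have := disjointFr (hD _ _ nii) (inB i'); rewrite zB.
  by split; [apply/imsetP; exists i | exact: inB].
move=> k l nkl; rewrite -setI_eq0; apply/eqP/setP => z; rewrite !inE.
apply/negP => /andP[/imsetP [i _ ->] /imsetP [i' _ e]].
have [h1 _] := HG k; have [h1' _] := HG l.
have := h1 i; have := h1' i'; rewrite !inE -e => /andP[_ /eqP e1] /andP[_ /eqP e2].
by move: nkl; rewrite -e1 e2 eqxx.
Qed.
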